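(* Let $G=(V,E)$ be a mobility graph and fix parameters $L\ge1$, $\tau\ge1$. Define $f:2^V\to\mathbb{R}_{\ge0}$ by $f(S)=\sum_{v\in V}\sqrt{\ell(v,\tau,S)}$. Then $f$ is monotone, i.e. $f(S\cup\{v\})\ge f(S)$ for all $S\subseteq V$, $v\in V$, and submodular, i.e. $f(S\cup\{v\})-f(S)\ge f(T\cup\{v\})-f(T)$ for all $S\subseteq T\subseteq V$ and $v\in V\setminus T$.
   Context: A mobility graph is a directed graph $G=(V,E)$ (self-loops allowed) with a probability $p_e\in[0,1]$ on each edge $e$, such that for each $u\in V$, $\sum_{v\in\Gamma^{OUT}(u)} p_{(u,v)}=1$, where $\Gamma^{OUT}(u)=\{w:(u,w)\in E\}$ and $\Gamma^{IN}(v)=\{w:(w,v)\in E\}$. For a seed set $S\subseteq V$ and integer $L\ge1$, the loads are defined by $\ell(v,0,S)=L$ if $v\in S$, $\ell(v,0,S)=0$ otherwise, and for $t\ge1$, $\ell(v,t,S)=\sum_{u\in\Gamma^{IN}(v)} p_{(u,v)}\,\ell(u,t-1,S)$ for all $v\in V$. *)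

(* Defs.v *)
From mathcomp Require Import all_boot all_order all_algebra.
Set Implicit Arguments. Unset Strict Implicit. Unset Printing Implicit Defensive.
Import Order.TTheory GRing.Theory Num.Theory.
Local Open Scope ring_scope.

(* A mobility graph on a finite vertex set V: a directed edge relation E
   (self-loops allowed) and edge probabilities p with p (u,v) in [0,1] for
   (u,v) in E, and sum over out-neighbours equal to 1.  p is given as a total
   function V -> V -> R; its values off E are irrelevant (we require them 0). *)
Definition out_nbrs (V : finType) (E : rel V) (u : V) : {set V} := [set w | E u w].
Definition in_nbrs (V : finType) (E : rel V) (v : V) : {set V} := [set w | E w v].

Definition mobility_graph (R : numDomainType) (V : finType) (E : rel V)
  (p : V -> V -> R) : Prop :=
  (forall u v, E u v -> 0 <= p u v <= 1) /\
  (forall u, \sum_(v in out_nbrs E u) p u v = 1).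

Fixpoint load (R : numDomainType) (V : finType) (E : rel V) (p : V -> V -> R)
  (L : nat) (t : nat) (S : {set V}) (v : V) : R :=
  match t with
  | 0 => if v \in S then L%:R else 0
  | t'.+1 => \sum_(u in in_nbrs E v) p u v * load E p L t' S u
  end.

Definition f_sqrt (R : rcfType) (V : finType) (E : rel V) (p : V -> V -> R)
  (L tau : nat) (S : {set V}) : R :=
  \sum_(v : V) Num.sqrt (load E p L tau S v).

(* Main.v *)
Require Import Defs.
From mathcomp Require Import all_boot all_order all_algebra.
From mathcomp Require Import ring lra.
Import Order.TTheory GRing.Theory Num.Theory.
Local Open Scope ring_scope.

Section L.
Variables (R : rcfType) (V : finType) (E : rel V) (p : V -> V -> R) (L : nat).
Hypothesis pge0 : forall u v, E u v -> 0 <= p u v.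

Lemma load_ge0 t (S : {set V}) x : 0 <= load E p L t S x.
Proof.
elim: t x => [|t IH] x /=; first by case: ifP.
apply: sumr_ge0 => u; rewrite inE => Hu; apply: mulr_ge0; [exact: pge0|exact: IH].
Qed.

Lemma load_mono t (S T : {set V}) x : S \subset T -> load E p L t S x <= load E p L t T x.
Proof.
move=> ST; elim: t x => [|t IH] x /=.
  case: ifP => xS; first by rewrite (subsetP ST _ xS).
  by case: ifP.
apply: ler_sum => u; rewrite inE => Hu; apply: ler_wpM2l; [exact: pge0|exact: IH].
Qed.

Lemma load_add t (S : {set V}) v x : v \notin S ->
  load E p L t (v |: S) x = load E p L t S x + load E p L t [set v] x.
Proof.
move=> vS; elim: t x => [|t IH] x /=.
  rewrite !inE; case: (eqVneq x v) => [->|_] /=; first by rewrite (negbTE vS) add0r.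
  by case: (x \in S); rewrite addr0.
rewrite -big_split /=; apply: eq_bigr => u _; by rewrite IH mulrDr.
Qed.
End L.

Lemma sqrt_conc (R : rcfType) (a b d : R) : 0 <= a -> a <= b -> 0 <= d ->
  Num.sqrt (b + d) - Num.sqrt b <= Num.sqrt (a + d) - Num.sqrt a.
Proof.
move=> a0 ab d0.
have b0 : 0 <= b by exact: le_trans ab.
suff H : Num.sqrt (b + d) + Num.sqrt a <= Num.sqrt (a + d) + Num.sqrt b by lra.
rewrite -ler_sqr ?nnegrE ?addr_ge0 ?sqrtr_ge0 //.
rewrite !sqrrD !sqr_sqrtr ?addr_ge0 //.
have : Num.sqrt (b + d) * Num.sqrt a <= Num.sqrt (a + d) * Num.sqrt b.
  rewrite -!sqrtrM ?addr_ge0 // ler_sqrt; last by rewrite mulr_ge0 ?addr_ge0.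
  nra.
lra.
Qed.

Theorem mainTheorem5 (R : rcfType) (V : finType) (E : rel V) (p : V -> V -> R)
  (L tau : nat) :
  mobility_graph E p -> (1 <= L)%N -> (1 <= tau)%N ->
  (forall (S : {set V}) (v : V),
      f_sqrt E p L tau S <= f_sqrt E p L tau (v |: S)) /\
  (forall (S T : {set V}) (v : V), S \subset T -> v \notin T ->
      f_sqrt E p L tau (v |: T) - f_sqrt E p L tau T
      <= f_sqrt E p L tau (v |: S) - f_sqrt E p L tau S).
Proof.
move=> [Hp _] _ _.
have pge0 : forall u v, E u v -> 0 <= p u v by move=> u v /Hp /andP[].
split.
  move=> S v; apply: ler_sum => x _; rewrite ler_sqrt ?load_ge0 //.
  by apply: load_mono => //; apply: subsetUr.
move=> S T v ST vT.
have vS : v \notin S by apply: contra vT; apply: (subsetP ST).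
rewrite /f_sqrt -!sumrB; apply: ler_sum => x _.
rewrite !load_add //; apply: sqrt_conc; by [apply: load_ge0|apply: load_mono].
Qed.
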